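(* Suppose all speeds are integer multiples of a common factor $\epsilon\in(0,1]$ and the protocol is run with $\alpha=4s_{\max}/\epsilon$. If the system is in a state $x$ that is not a Nash equilibrium, then for every round $k\ge0$ \[ \mathbb{E}\big[\Psi_1(X^k)-\Psi_1(X^{k+1})\,\big|\,X^k=x\big] \ge \frac{\epsilon^2}{8\,\Delta\, s_{\max}^3}. \]
   Context: $G=(V,E)$ is an undirected graph on $n$ vertices (processors) with maximum degree $\Delta$; $\deg(i)$ is the degree and $d_{ij}=\max\{\deg(i),\deg(j)\}$. Processor $i$ has speed $s_i=n_i\epsilon$ with $n_i$ a positive integer, speeds scaled so that the smallest speed is $1$; $s_{\max}=\max_i s_i$, $\mathcal{S}=\sum_i s_i$. There are $m$ unit tasks; in state $x$, $w_i(x)$ is the number of tasks on $i$ and $\ell_i(x)=w_i(x)/s_i$. Protocol: in each round every task, independently, with $i$ its current processor, chooses a uniformly random neighbor $j$; if $\ell_i-\ell_j>1/s_j$ it moves to $j$ with probability $\frac{\deg(i)}{d_{ij}}\cdot\frac{\ell_i-\ell_j}{\alpha(1/s_i+1/s_j)w_i}$, otherwise stays. $X^k$ is the state after $k$ rounds. $\Psi_1(x)=\sum_i \frac{w_i(x)(w_i(x)+1)}{s_i}-\frac{m^2}{\mathcal{S}}-\frac{mn}{\mathcal{S}}-\frac{n^2}{4\mathcal{S}}+\frac14\sum_i\frac{1}{s_i}$. A state is a Nash equilibrium if $\ell_i-\ell_j\le 1/s_j$ for every ordered pair $(i,j)$ of adjacent processors. *)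

(* Defs.v *)
From HB Require Import structures.
From mathcomp Require Import all_boot all_order all_algebra.
Set Implicit Arguments. Unset Strict Implicit. Unset Printing Implicit Defensive.
Import Order.TTheory GRing.Theory Num.Theory.
Local Open Scope ring_scope.

(* Processors are 'I_n, tasks are 'I_m.  A configuration assigns each task
   to a processor: a : {ffun 'I_m -> 'I_n}.  The graph is e : rel 'I_n. *)

Definition state (n m : nat) := {ffun 'I_m -> 'I_n}.

Definition load (n m : nat) (a : state n m) (i : 'I_n) : nat :=
  #|[set t | a t == i]|.

Definition deg (n : nat) (e : rel 'I_n) (i : 'I_n) : nat := #|[set j | e i j]|.

Definition Delta (n : nat) (e : rel 'I_n) : nat := \max_(i < n) deg e i.

Definition dmax (n : nat) (e : rel 'I_n) (i j : 'I_n) : nat :=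
  maxn (deg e i) (deg e j).

Definition smax (R : realFieldType) (n : nat) (s : 'I_n -> R) : R :=
  \big[Num.max/0]_(i < n) s i.

Definition Stot (R : realFieldType) (n : nat) (s : 'I_n -> R) : R :=
  \sum_(i < n) s i.

Definition ell (R : realFieldType) (n : nat) (s : 'I_n -> R) (w : 'I_n -> nat)
  (i : 'I_n) : R := (w i)%:R / s i.

Definition is_NE (R : realFieldType) (n : nat) (e : rel 'I_n) (s : 'I_n -> R)
  (w : 'I_n -> nat) : Prop :=
  forall i j, e i j -> ell s w i - ell s w j <= (s j)^-1.

(* Probability that a task on i (in a state with load vector w) picks neighbor j
   (prob. 1/deg i) and then moves to j. *)
Definition move_prob (R : realFieldType) (n : nat) (e : rel 'I_n)
  (s : 'I_n -> R) (alpha : R) (w : 'I_n -> nat) (i j : 'I_n) : R :=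
  if e i j && (ell s w i - ell s w j > (s j)^-1) then
    ((deg e i)%:R)^-1 *
    ((deg e i)%:R / (dmax e i j)%:R *
     ((ell s w i - ell s w j) /
      (alpha * ((s i)^-1 + (s j)^-1) * (w i)%:R)))
  else 0.

Definition task_trans (R : realFieldType) (n : nat) (e : rel 'I_n)
  (s : 'I_n -> R) (alpha : R) (w : 'I_n -> nat) (i j : 'I_n) : R :=
  if i == j then 1 - \sum_(k < n | k != i) move_prob e s alpha w i k
  else move_prob e s alpha w i j.

Definition step_prob (R : realFieldType) (n m : nat) (e : rel 'I_n)
  (s : 'I_n -> R) (alpha : R) (a b : state n m) : R :=
  \prod_(t < m) task_trans e s alpha (load a) (a t) (b t).

Fixpoint dist (R : realFieldType) (n m : nat) (e : rel 'I_n)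
  (s : 'I_n -> R) (alpha : R) (mu0 : state n m -> R) (k : nat)
  : state n m -> R :=
  match k with
  | O => mu0
  | S k' => fun b => \sum_(a : state n m)
                      dist e s alpha mu0 k' a * step_prob e s alpha a b
  end.

Definition Psi1 (R : realFieldType) (n m : nat) (s : 'I_n -> R)
  (w : 'I_n -> nat) : R :=
  \sum_(i < n) (w i)%:R * ((w i)%:R + 1) / s i
  - (m%:R ^+ 2) / Stot s - (m%:R * n%:R) / Stot s
  - (n%:R ^+ 2) / (4 * Stot s) + 4^-1 * \sum_(i < n) (s i)^-1.

(* The event X^k = x (x a load vector) *)
Definition has_load (n m : nat) (x : 'I_n -> nat) (a : state n m) : bool :=
  [forall i, load a i == x i].

(* E[Psi1(X^k) - Psi1(X^{k+1}) | X^k = x], computed from the joint law of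
   (X^k, X^{k+1}). *)
Definition cond_drop (R : realFieldType) (n m : nat) (e : rel 'I_n)
  (s : 'I_n -> R) (alpha : R) (mu0 : state n m -> R) (k : nat)
  (x : 'I_n -> nat) : R :=
  (\sum_(a : state n m | has_load x a) \sum_(b : state n m)
      dist e s alpha mu0 k a * step_prob e s alpha a b
      * (Psi1 m s (load a) - Psi1 m s (load b)))
  / (\sum_(a : state n m | has_load x a) dist e s alpha mu0 k a).

(* Main.v *)
Require Import Defs.
From HB Require Import structures.
From mathcomp Require Import all_boot all_order all_algebra.
From mathcomp Require Import ring lra.
From Stdlib Require Import FunctionalExtensionality.
Set Implicit Arguments. Unset Strict Implicit. Unset Printing Implicit Defensive.
Import Order.TTheory GRing.Theory Num.Theory.
Local Open Scope ring_scope.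

Lemma prod_exp (R : realFieldType) n m (p h : 'I_m -> 'I_n -> R) :
  \sum_(b : {ffun 'I_m -> 'I_n}) \prod_t (p t (b t) * h t (b t))
  = \prod_t \sum_j p t j * h t j.
Proof. by rewrite bigA_distr_bigA. Qed.

Lemma load_sum (R : realFieldType) n m (b : state n m) i :
  (load b i)%:R = \sum_t ((b t == i)%:R : R).
Proof.
rewrite /load -sum1_card natr_sum big_mkcond /=.
by apply: eq_bigr => t _; rewrite inE; case: (b t == i).
Qed.

Lemma sum_by_load (R : realFieldType) n m (a : state n m) (f : 'I_n -> R) :
  \sum_t f (a t) = \sum_j (load a j)%:R * f j.
Proof.
under [RHS]eq_bigr => j _ do rewrite load_sum mulr_suml.
rewrite exchange_big /=; apply: eq_bigr => t _.
rewrite (bigD1 (a t)) //= eqxx mul1r big1 ?addr0 // => j /negPf hj.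
by rewrite eq_sym hj mul0r.
Qed.
Lemma prod_expH (R : realFieldType) n m (p h : 'I_m -> 'I_n -> R) :
  \sum_(b : {ffun 'I_m -> 'I_n}) (\prod_t p t (b t)) * \prod_t h t (b t)
  = \prod_t \sum_j p t j * h t j.
Proof. rewrite -prod_exp; apply: eq_bigr => b _; by rewrite big_split. Qed.

Lemma E_one (R : realFieldType) n m (p : 'I_m -> 'I_n -> R)
  (hp : forall t, \sum_j p t j = 1) :
  \sum_(b : {ffun 'I_m -> 'I_n}) \prod_t p t (b t) = 1.
Proof.
transitivity (\sum_(b : {ffun 'I_m -> 'I_n}) (\prod_t p t (b t)) * \prod_(t < m) (fun _ _ => 1 : R) t (b t)).
  by apply: eq_bigr => b _; rewrite big1_eq mulr1.
rewrite (prod_expH p (fun _ _ => 1)) big1 // => t _; under eq_bigr do rewrite mulr1; exact: hp.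
Qed.

Lemma E_ind (R : realFieldType) n m (p : 'I_m -> 'I_n -> R)
  (hp : forall t, \sum_j p t j = 1) t0 i :
  \sum_(b : {ffun 'I_m -> 'I_n}) (\prod_t p t (b t)) * (b t0 == i)%:R = p t0 i.
Proof.
have E b : \prod_t (if t == t0 then (b t == i)%:R else 1) = (b t0 == i)%:R :> R.
  rewrite (bigD1 t0) //= eqxx big1 ?mulr1 // => t /negPf ->; done.
under eq_bigr do rewrite -E.
rewrite (prod_expH p (fun t j => if t == t0 then (j == i)%:R else 1)). rewrite (bigD1 t0) //= eqxx [X in _ * X]big1 ?mulr1.
  rewrite (bigD1 i) //= eqxx mulr1 big1 ?addr0 // => j /negPf ->; by rewrite mulr0.
move=> t /negPf ->; under eq_bigr do rewrite mulr1; exact: hp.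
Qed.

Lemma E_ind2 (R : realFieldType) n m (p : 'I_m -> 'I_n -> R)
  (hp : forall t, \sum_j p t j = 1) t0 t1 i : t0 != t1 ->
  \sum_(b : {ffun 'I_m -> 'I_n}) (\prod_t p t (b t)) *
     ((b t0 == i)%:R * (b t1 == i)%:R) = p t0 i * p t1 i.
Proof.
move=> h01.
have E b : \prod_t (if (t == t0) || (t == t1) then (b t == i)%:R else 1)
    = (b t0 == i)%:R * (b t1 == i)%:R :> R.
  rewrite (bigD1 t0) //= eqxx (bigD1 t1) /=; last by rewrite eq_sym.
  rewrite eqxx orbT big1 ?mulr1 // => t /andP[/negPf -> /negPf ->]; done.
under eq_bigr do rewrite -E.
rewrite (prod_expH p (fun t j => if (t == t0) || (t == t1) then (j == i)%:R else 1)).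
have S j : \sum_j0 p j j0 * (j0 == i)%:R = p j i.
  rewrite (bigD1 i) //= eqxx mulr1 big1 ?addr0 // => k /negPf ->; by rewrite mulr0.
rewrite (bigD1 t0) //= eqxx (bigD1 t1) /=; last by rewrite eq_sym.
rewrite eqxx orbT !S [X in _ * (_ * X)]big1 ?mulr1 // => t /andP[/negPf -> /negPf ->].
under eq_bigr do rewrite mulr1; exact: hp.
Qed.

Lemma E_sq (R : realFieldType) n m (p : 'I_m -> 'I_n -> R)
  (hp : forall t, \sum_j p t j = 1) i :
  \sum_(b : {ffun 'I_m -> 'I_n}) (\prod_t p t (b t)) *
     ((\sum_t ((b t == i)%:R : R)) * (\sum_t ((b t == i)%:R : R) + 1))
  = (\sum_t p t i) ^+ 2 + 2 * \sum_t p t i - \sum_t p t i ^+ 2.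
Proof.
have L b : (\sum_t ((b t == i)%:R : R)) * (\sum_t ((b t == i)%:R : R) + 1)
   = \sum_t \sum_t' ((b t == i)%:R * (b t' == i)%:R) + \sum_t (b t == i)%:R.
  by rewrite mulrDr mulr1 mulr_suml; congr (_ + _); apply: eq_bigr => t _; rewrite mulr_sumr.
under eq_bigr do rewrite L mulrDr mulr_sumr.
rewrite big_split /= exchange_big /=.
have -> : \sum_(b : {ffun 'I_m -> 'I_n}) (\prod_t p t (b t)) * \sum_t (b t == i)%:R
   = \sum_t p t i.
  under eq_bigr do rewrite mulr_sumr.
  rewrite exchange_big /=; apply: eq_bigr => t _; exact: E_ind.
have -> : \sum_t \sum_(b : {ffun 'I_m -> 'I_n}) (\prod_t0 p t0 (b t0)) *
      \sum_t' ((b t == i)%:R * (b t' == i)%:R)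
   = \sum_t (p t i + p t i * (\sum_t' p t' i - p t i)).
  apply: eq_bigr => t _.
  under eq_bigr do rewrite mulr_sumr.
  rewrite exchange_big /= (bigD1 t) //=.
  have -> : \sum_(b : {ffun 'I_m -> 'I_n}) (\prod_t0 p t0 (b t0)) *
      ((b t == i)%:R * (b t == i)%:R) = p t i.
    rewrite -(E_ind hp t i); apply: eq_bigr => b _.
    by case: (b t == i); rewrite ?mulr1 ?mulr0.
  congr (_ + _).
  rewrite (bigD1 t (isT : true)) /= addrAC subrr add0r mulr_sumr.
  by apply: eq_bigr => t' ht'; rewrite E_ind2 // eq_sym.
rewrite big_split /=.
set S := \sum_t p t i. set Q := \sum_t p t i * p t i.
have E2 : \sum_(t<m) p t i * (S - p t i) = S * S - Q.
  by rewrite /Q {2}/S mulr_suml -sumrB; apply: eq_bigr => t _; rewrite mulrBr.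
rewrite E2.
ring.
Qed.
Lemma mp_ii (R : realFieldType) n (e : rel 'I_n) (e_irr : irreflexive e)
  (s : 'I_n -> R) al w i : move_prob e s al w i i = 0.
Proof. by rewrite /move_prob e_irr. Qed.

Lemma mp_ne (R : realFieldType) n (e : rel 'I_n) (s : 'I_n -> R) al w i j :
  ~~ e i j -> move_prob e s al w i j = 0.
Proof. by rewrite /move_prob => /negPf ->. Qed.

Lemma deg_pos n (e : rel 'I_n) i j : e i j -> (0 < deg e i)%N.
Proof. by move=> h; rewrite /deg; apply/card_gt0P; exists j; rewrite inE. Qed.

Lemma dmax_pos n (e : rel 'I_n) i j : e i j -> (0 < dmax e i j)%N.
Proof. move=> h; rewrite /dmax; apply: leq_trans (deg_pos h) (leq_maxl _ _). Qed.

Lemma w_pos (R : realFieldType) n (s : 'I_n -> R) (spos : forall i, 0 < s i) w i j :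
  (s j)^-1 < ell s w i - ell s w j -> (0 < w i)%N.
Proof.
rewrite /ell lt0n; case: eqP => // ->.
rewrite mul0r sub0r => h; exfalso.
have : 0 <= (w j)%:R / s j by rewrite divr_ge0 // ltW.
have : 0 < (s j)^-1 by rewrite invr_gt0.
lra.
Qed.

Lemma mp_bounds (R : realFieldType) n (e : rel 'I_n) (s : 'I_n -> R)
  (spos : forall i, 0 < s i) al (al1 : 1 <= al) w i j :
  0 <= move_prob e s al w i j /\
  move_prob e s al w i j <= (if e i j then ((deg e i)%:R)^-1 else 0).
Proof.
rewrite /move_prob; case: ifP => [/andP[eij h] | _]; last first.
  by split => //; case: (e i j); rewrite ?invr_ge0 ?ler0n.
rewrite eij.
have d0 : 0 < (deg e i)%:R :> R by rewrite ltr0n (deg_pos eij).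
have dm0 : 0 < (dmax e i j)%:R :> R by rewrite ltr0n (dmax_pos eij).
have w0 : 0 < (w i)%:R :> R by rewrite ltr0n (w_pos spos h).
have si0 := spos i; have sj0 := spos j.
have iv0 : 0 < (s i)^-1 + (s j)^-1 by rewrite addr_gt0 ?invr_gt0.
have den0 : 0 < al * ((s i)^-1 + (s j)^-1) * (w i)%:R.
  by rewrite !mulr_gt0 //; lra.
have L0 : 0 < ell s w i - ell s w j.
  by apply: lt_trans h; rewrite invr_gt0.
have r1 : (deg e i)%:R / (dmax e i j)%:R <= 1 :> R.
  by rewrite ler_pdivrMr // mul1r ler_nat /dmax leq_maxl.
have r0 : 0 <= (deg e i)%:R / (dmax e i j)%:R :> R by rewrite divr_ge0 // ltW.
have q0 : 0 <= (ell s w i - ell s w j) / (al * ((s i)^-1 + (s j)^-1) * (w i)%:R).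
  by rewrite divr_ge0 // ltW.
have q1 : (ell s w i - ell s w j) / (al * ((s i)^-1 + (s j)^-1) * (w i)%:R) <= 1.
  rewrite ler_pdivrMr // mul1r.
  have lj : 0 <= ell s w j by rewrite /ell divr_ge0 ?ler0n // ltW.
  have : ell s w i <= ((s i)^-1 + (s j)^-1) * (w i)%:R.
    rewrite /ell mulrDl mulrC lerDl mulr_ge0 // ?invr_ge0 ?ler0n // ltW //.
  have : ((s i)^-1 + (s j)^-1) * (w i)%:R <= al * ((s i)^-1 + (s j)^-1) * (w i)%:R.
    rewrite -mulrA ler_peMl //; by rewrite ltW // mulr_gt0.
  lra.
split.
  apply: mulr_ge0; [by rewrite invr_ge0 ltW | exact: mulr_ge0].
apply: ler_piMr; first by rewrite invr_ge0 ltW.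
exact: mulr_ile1.
Qed.

Lemma mp_sum1 (R : realFieldType) n (e : rel 'I_n) (s : 'I_n -> R)
  (spos : forall i, 0 < s i) al (al1 : 1 <= al) w i :
  \sum_k move_prob e s al w i k <= 1.
Proof.
apply: le_trans (_ : \sum_k (if e i k then ((deg e i)%:R)^-1 else 0) <= 1).
  by apply: ler_sum => k _; case: (mp_bounds e spos al1 w i k).
rewrite -big_mkcond sumr_const /=.
have -> : #|[pred k | e i k]| = deg e i by rewrite /deg; apply: eq_card => k; rewrite inE.
case: (posnP (deg e i)) => [->|d0]; first by rewrite mulr0n ler01.
by rewrite -[_ *+ deg e i]mulr_natr mulVf // pnatr_eq0 -lt0n.
Qed.

Lemma tt_eq (R : realFieldType) n (e : rel 'I_n) (e_irr : irreflexive e)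
  (s : 'I_n -> R) al w j i :
  task_trans e s al w j i =
  (if j == i then 1 - \sum_k move_prob e s al w j k else 0) + move_prob e s al w j i.
Proof.
rewrite /task_trans; case: eqP => [->|_]; last by rewrite add0r.
by rewrite mp_ii // addr0 [in RHS](bigD1 i) //= mp_ii // add0r.
Qed.

Lemma tt_sum (R : realFieldType) n (e : rel 'I_n) (e_irr : irreflexive e)
  (s : 'I_n -> R) al w j :
  \sum_i task_trans e s al w j i = 1.
Proof.
under eq_bigr do rewrite tt_eq //.
rewrite big_split /= (bigD1 j) //= eqxx [X in _ + X + _]big1 ?addr0 ?subrK //.
by move=> i /negPf; rewrite eq_sym => ->.
Qed.

Lemma tt_ge0 (R : realFieldType) n (e : rel 'I_n) (e_irr : irreflexive e) (s : 'I_n -> R)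
  (spos : forall i, 0 < s i) al (al1 : 1 <= al) w j i :
  0 <= task_trans e s al w j i.
Proof.
rewrite tt_eq //; apply: addr_ge0; last by case: (mp_bounds e spos al1 w j i).
by case: eqP => // _; rewrite subr_ge0 mp_sum1.
Qed.

Lemma dist_ge0 (R : realFieldType) n m (e : rel 'I_n) (e_irr : irreflexive e) (s : 'I_n -> R)
  (spos : forall i, 0 < s i) al (al1 : 1 <= al) (mu0 : state n m -> R)
  (mu0_ge0 : forall a, 0 <= mu0 a) k a : 0 <= dist e s al mu0 k a.
Proof.
elim: k a => [|k IH] a /=; first exact: mu0_ge0.
apply: sumr_ge0 => b _; apply: mulr_ge0 => //.
by apply: prodr_ge0 => t _; apply: tt_ge0.
Qed.

Lemma Psi_diff (R : realFieldType) n m (s : 'I_n -> R) (w1 w2 : 'I_n -> nat) :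
  Psi1 m s w1 - Psi1 m s w2 =
  \sum_i (w1 i)%:R * ((w1 i)%:R + 1) / s i - \sum_i (w2 i)%:R * ((w2 i)%:R + 1) / s i.
Proof. rewrite /Psi1; ring. Qed.

Lemma drop_formula (R : realFieldType) n m (e : rel 'I_n) (e_irr : irreflexive e)
  (s : 'I_n -> R) al (a : state n m) :
  \sum_(b : state n m) step_prob e s al a b * (Psi1 m s (load a) - Psi1 m s (load b))
  = \sum_i ((load a i)%:R * ((load a i)%:R + 1) -
      ((\sum_j (load a j)%:R * task_trans e s al (load a) j i) ^+ 2
       + 2 * \sum_j (load a j)%:R * task_trans e s al (load a) j i
       - \sum_j (load a j)%:R * task_trans e s al (load a) j i ^+ 2)) / s i.
Proof.
set T := task_trans e s al (load a).
set p := fun t j => T (a t) j.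
have hp t : \sum_j p t j = 1 by exact: tt_sum.
under eq_bigr do rewrite Psi_diff mulrBr.
rewrite sumrB -mulr_suml.
have -> : \sum_(b : state n m) step_prob e s al a b = 1 by exact: (E_one hp).
rewrite mul1r.
under [X in _ - X]eq_bigr do rewrite mulr_sumr.
rewrite [X in _ - X]exchange_big /= -sumrB; apply: eq_bigr => i _.
rewrite mulrBl; congr (_ - _).
under eq_bigr do rewrite mulrA.
rewrite -mulr_suml; congr (_ / _).
rewrite -(sum_by_load a (fun j => T j i)) -(sum_by_load a (fun j => T j i ^+ 2)).
rewrite -(E_sq hp i).
by apply: eq_bigr => b _; rewrite load_sum.
Qed.
Lemma pair_core (R : realFieldType) (a b smax eps di dj dm D L p : R) :
 0 < a -> 0 < b -> 1 <= a*smax -> 1 <= b*smax -> 1 <= smax -> 0 < eps -> eps <= 1 ->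
 0 <= di -> di <= dm -> 0 <= dj -> dj <= dm -> 1 <= dm -> dm <= D ->
 eps*a*b <= L - b ->
 p * (dm*(4*smax)*(a+b)) = L*eps ->
 eps^+2 / (8*D*smax^+3) <= p*(2*(L - b)) - p^+2*(di*a + dj*b).
Proof.
move=> a0 b0 as1 bs1 s1 e0 e1 di0 didm dj0 djdm dm1 dmD hd hp.
set d := L - b in hd *.
have d0 : 0 <= d by apply: le_trans hd; rewrite !mulr_ge0 // ?ltW.
have K0 : 0 < dm*(4*smax)*(a+b).
  by rewrite !mulr_gt0 ?addr_gt0 //; lra.
have Lb : b <= L by rewrite -subr_ge0 -/d.
have p0 : 0 <= p.
  have -> : p = L*eps / (dm*(4*smax)*(a+b)) by rewrite -hp mulfK // gt_eqF.
  apply: divr_ge0; last exact: ltW K0.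
  apply: mulr_ge0; last exact: ltW e0.
  exact: le_trans (ltW b0) Lb.
have h1 : p^+2*(di*a + dj*b) <= p^+2*(dm*(a+b)).
  apply: ler_wpM2l; first by rewrite sqr_ge0.
  rewrite mulrDr lerD // ler_wpM2r // ltW //.
have h2 : p^+2*(dm*(a+b)) * (4*smax) = p * (L*eps).
  by rewrite -hp; ring.
have h3 : L*eps <= 2*d*smax.
  have f1 : d*eps <= d*smax by apply: ler_wpM2l => //; lra.
  have f2 : eps*b <= d*smax.
    apply: le_trans (_ : eps*a*b*smax <= _); last by apply: ler_wpM2r => //; lra.
    have -> : eps*a*b*smax = (eps*b)*(a*smax) by ring.
    by rewrite ler_peMr // mulr_ge0 ?ltW.
  have -> : L = d + b by rewrite /d; ring.
  lra.
have h4 : p^+2*(dm*(a+b)) <= p*d/2.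
  have s0 : 0 < 4*smax by lra.
  rewrite -(ler_pM2r s0) h2.
  have -> : p*d/2*(4*smax) = p*(2*d*smax) by field.
  by apply: ler_wpM2l.
have h5 : p*d <= p*(2*d) - p^+2*(di*a + dj*b).
  have : p*d <= p*(2*d) - p*d/2 - p*d/2 by lra.
  move=> h; apply: le_trans h _.
  have : p*d/2 <= p*d by rewrite ler_pdivrMr //; nra.
  lra.
apply: le_trans h5.
have D0 : 0 < 8*D*smax^+3 by rewrite !mulr_gt0 ?exprn_gt0 //; lra.
rewrite ler_pdivrMr //.
rewrite -(ler_pM2r K0).
have -> : p*d*(8*D*smax^+3)*(dm*(4*smax)*(a+b)) = (p*(dm*(4*smax)*(a+b)))*d*(8*D*smax^+3) by ring.
rewrite hp.
have g1 : eps*a*b*b <= d*L by apply: ler_pM => //; [rewrite !mulr_ge0 // ltW | exact: ltW].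
have g2 : dm*(a+b) <= 2*D*smax^+2*a*b*b.
  have ga : a <= smax^+2*a*b*b.
    have -> : smax^+2*a*b*b = a*((b*smax)*(b*smax)) by ring.
    by rewrite ler_pMr // -[1]mulr1; apply: ler_pM.
  have gb : b <= smax^+2*a*b*b.
    have -> : smax^+2*a*b*b = b*((a*smax)*(b*smax)) by ring.
    by rewrite ler_pMr // -[1]mulr1; apply: ler_pM.
  have : dm*(a+b) <= D*(a+b) by apply: ler_wpM2r => //; lra.
  have : 0 <= D by lra.
  nra.
have -> : eps^+2 * (dm * (4 * smax) * (a + b)) = eps*(4*smax*eps)*(dm*(a+b)) by ring.
have -> : L*eps*d*(8*D*smax^+3) = eps*(4*smax*eps)*(2*D*smax^+2) * (d*L/eps) by field; lra.
rewrite -[X in _ <= X]mulrA.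
apply: ler_wpM2l; first by rewrite !mulr_ge0 ?ltW //; lra.
apply: le_trans g2 _.
have -> : 2*D*smax^+2*a*b*b = (2*D*smax^+2) * (eps*a*b*b/eps) by field; lra.
apply: ler_wpM2l; first by rewrite !mulr_ge0 ?exprn_ge0 //; lra.
by rewrite ler_pM2r ?invr_gt0.
Qed.
Lemma delta_bound (R : realFieldType) (eps : R) (ki kj wi wj : nat) :
  0 < eps -> (0 < ki)%N -> (0 < kj)%N ->
  (kj%:R * eps)^-1 < wi%:R / (ki%:R * eps) - wj%:R / (kj%:R * eps) ->
  eps * (ki%:R * eps)^-1 * (kj%:R * eps)^-1 <=
    wi%:R / (ki%:R * eps) - wj%:R / (kj%:R * eps) - (kj%:R * eps)^-1.
Proof.
move=> e0 ki0 kj0.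
have ki0' : 0 < ki%:R :> R by rewrite ltr0n.
have kj0' : 0 < kj%:R :> R by rewrite ltr0n.
have P : 0 < ki%:R * kj%:R * eps :> R by rewrite !mulr_gt0.
have E : wi%:R / (ki%:R * eps) - wj%:R / (kj%:R * eps) - (kj%:R * eps)^-1
   = ((wi * kj)%N%:R - ((wj + 1) * ki)%N%:R) / (ki%:R * kj%:R * eps) :> R.
  rewrite !natrM natrD; field.
  by rewrite !gt_eqF.
have E2 : eps * (ki%:R * eps)^-1 * (kj%:R * eps)^-1 = 1 / (ki%:R * kj%:R * eps) :> R.
  by field; rewrite !gt_eqF.
rewrite -subr_gt0 E E2 => h.
rewrite ler_pM2r ?invr_gt0 //.
move: h; rewrite pmulr_lgt0 ?invr_gt0 // subr_gt0 ltr_nat => h.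
by rewrite lerBrDr (_ : (1:R) = 1%:R) // -natrD ler_nat add1n.
Qed.
Lemma CS_set (R : realFieldType) n (A : {set 'I_n}) (g : 'I_n -> R) :
  (\sum_(j in A) g j) ^+ 2 <= #|A|%:R * \sum_(j in A) g j ^+ 2.
Proof.
have H : 0 <= \sum_(j in A) \sum_(k in A) (g j - g k) ^+ 2.
  by apply: sumr_ge0 => j _; apply: sumr_ge0 => k _; rewrite sqr_ge0.
have E : \sum_(j in A) \sum_(k in A) (g j - g k) ^+ 2 =
   2 * (#|A|%:R * \sum_(j in A) g j ^+ 2) - 2 * (\sum_(j in A) g j) ^+ 2.
  have E1 j : \sum_(k in A) (g j - g k) ^+ 2 =
     #|A|%:R * g j ^+ 2 + \sum_(k in A) g k ^+ 2 - 2 * g j * \sum_(k in A) g k.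
    have -> : \sum_(k in A) (g j - g k) ^+ 2 = \sum_(k in A) (g j ^+ 2 + g k ^+ 2)
       - \sum_(k in A) (2 * g j * g k) by rewrite -sumrB; apply: eq_bigr => k _; ring.
    by rewrite big_split sumr_const -mulr_sumr /= -[_ *+ #|A|]mulr_natl.
  under eq_bigr do rewrite E1.
  rewrite sumrB big_split /= sumr_const -mulr_natl -mulr_sumr -mulr_suml.
  by rewrite -mulr_sumr -[_ *+ #|A|]mulr_natl; ring.
move: H; rewrite E subr_ge0 => H.
by rewrite -(ler_pM2l (_ : 0 < 2 :> R)) //.
Qed.

Lemma swap_sum (R : realFieldType) n (G H : 'I_n -> 'I_n -> R) :
  \sum_i \sum_j (G i j + H j i) = \sum_i \sum_j (G i j + H i j).
Proof.
rewrite [LHS](eq_bigr (fun i => \sum_j G i j + \sum_j H j i)); last by move=> i _; rewrite big_split.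
rewrite [RHS](eq_bigr (fun i => \sum_j G i j + \sum_j H i j)); last by move=> i _; rewrite big_split.
by rewrite !big_split /= [X in _ + X = _]exchange_big.
Qed.

Lemma main_ineq (R : realFieldType) n (e : rel 'I_n) (e_sym : symmetric e)
  (s : 'I_n -> R) (spos : forall i, 0 < s i) (w : 'I_n -> nat)
  (mp : 'I_n -> 'I_n -> R)
  (mp0 : forall i j, 0 <= mp i j) (mpii : forall i, mp i i = 0)
  (mpe : forall i j, ~~ e i j -> mp i j = 0) (mp1 : forall i, \sum_k mp i k <= 1)
  (T : 'I_n -> 'I_n -> R)
  (hT : forall j i, T j i = (if j == i then 1 - \sum_k mp j k else 0) + mp j i) :
  \sum_i \sum_j ((w i)%:R * mp i j *
        ((2*(w i)%:R+1)/s i - (2*(w j)%:R+1)/s j - (s i)^-1 - (s j)^-1)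
     - ((w i)%:R * mp i j) ^+ 2 * ((deg e i)%:R / s i + (deg e j)%:R / s j))
  <= \sum_i ((w i)%:R * ((w i)%:R + 1) -
      ((\sum_j (w j)%:R * T j i) ^+ 2
       + 2 * \sum_j (w j)%:R * T j i
       - \sum_j (w j)%:R * T j i ^+ 2))
      / s i.
Proof.
set phi := fun i j => (w i)%:R * mp i j.
have W0 i : 0 <= (w i)%:R :> R by rewrite ler0n.
have phi0 i j : 0 <= phi i j by rewrite /phi mulr_ge0.
have mple1 i j : mp i j <= 1.
  apply: le_trans (mp1 i); rewrite (bigD1 j) //= lerDl; exact: sumr_ge0.
set G := fun i j => (2 * (w i)%:R + 1) / s i * phi i j - (deg e i)%:R / s i * phi i j ^+ 2
                    - phi i j / s i.
set H := fun j i => - ((2 * (w i)%:R + 1) / s i * phi j i) - (deg e i)%:R / s i * phi j i ^+ 2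
                    - phi j i / s i.
have -> : \sum_i \sum_j ((w i)%:R * mp i j *
        ((2*(w i)%:R+1)/s i - (2*(w j)%:R+1)/s j - (s i)^-1 - (s j)^-1)
     - ((w i)%:R * mp i j) ^+ 2 * ((deg e i)%:R / s i + (deg e j)%:R / s j))
   = \sum_i \sum_j (G i j + H j i).
  rewrite [RHS]swap_sum; apply: eq_bigr => i _; apply: eq_bigr => j _.
  rewrite /G /H /phi; ring.
apply: ler_sum => i _.
set D := \sum_j (phi j i - phi i j).
have EE : \sum_j (w j)%:R * T j i = (w i)%:R + D.
  rewrite /D sumrB.
  under eq_bigr do rewrite hT mulrDr.
  rewrite big_split /= (bigD1 i) //= eqxx [X in _ + X + _ = _]big1 ?addr0.
    by rewrite mulrBr mulr1 mulr_sumr /phi; ring.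
  by move=> j /negPf hj; rewrite hj mulr0.
have QQ : \sum_j (w j)%:R * (T j i - T j i ^+ 2) <= \sum_j (phi j i + phi i j).
  rewrite big_split /=.
  have -> : \sum_j phi i j = \sum_j (if j == i then \sum_k phi i k else 0).
    by rewrite -big_mkcond /= big_pred1_eq.
  rewrite -big_split /=; apply: ler_sum => j _.
  rewrite hT /phi; case: eqP => [->|/eqP nji].
    rewrite mpii addr0 -mulr_sumr -mulrDr ler_wpM2l // add0r.
    have s0 : 0 <= \sum_k mp i k by exact: sumr_ge0.
    have := mp1 i; nra.
  rewrite add0r addr0; apply: ler_wpM2l => //.
  have := mp0 j i; have := mple1 j i; nra.
have CS : D ^+ 2 <= (deg e i)%:R * \sum_j (phi j i ^+ 2 + phi i j ^+ 2).
  have -> : D = \sum_(j in [set j | e i j]) (phi j i - phi i j).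
    rewrite /D [RHS]big_mkcond /=; apply: eq_bigr => j _; rewrite inE.
    case: (boolP (e i j)) => // hij.
    rewrite /phi !mpe ?mulr0 ?subrr //; by rewrite // e_sym.
  apply: le_trans (CS_set _ _) _.
  rewrite /deg ler_wpM2l //.
  rewrite [X in _ <= X](bigID (fun j => j \in [set j | e i j])) /= -[X in X <= _]addr0 lerD //; last by apply: sumr_ge0 => j _; rewrite addr_ge0 ?sqr_ge0.
  apply: ler_sum => j _.
  have := phi0 i j; have := phi0 j i; nra.
have Tsplit : \sum_j (w j)%:R * T j i ^+ 2 = \sum_j (w j)%:R * T j i - \sum_j (w j)%:R * (T j i - T j i ^+ 2).
  by rewrite -sumrB; apply: eq_bigr => j _; ring.
rewrite Tsplit EE.
have -> : \sum_j (G i j + H j i) =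
   (-(2 * (w i)%:R + 1) * D - (deg e i)%:R * \sum_j (phi j i ^+ 2 + phi i j ^+ 2)
     - \sum_j (phi j i + phi i j)) / s i.
  rewrite /D !mulr_sumr -!sumrB mulr_suml.
  by apply: eq_bigr => j _; rewrite /G /H; ring.
rewrite ler_pM2r ?invr_gt0 //.
move: QQ CS; set V := \sum_j (w j)%:R * (T j i - T j i ^+ 2).
set X := \sum_j (phi j i ^+ 2 + phi i j ^+ 2).
set Y := \sum_j (phi j i + phi i j).
move=> QQ CS.
have : (w i)%:R * ((w i)%:R + 1) - (((w i)%:R + D) ^+ 2 + 2 * ((w i)%:R + D) - ((w i)%:R + D - V))
   = - (2 * (w i)%:R + 1) * D - D ^+ 2 - V by ring.
move=> ->; lra.
Qed.

Theorem lemma25 (R : realFieldType) (n m : nat) (e : rel 'I_n)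
  (e_sym : symmetric e) (e_irr : irreflexive e)
  (s : 'I_n -> R) (eps : R)
  (eps_pos : 0 < eps) (eps_le1 : eps <= 1)
  (s_mult : forall i, exists k : nat, (0 < k)%N /\ s i = k%:R * eps)
  (s_ge1 : forall i, 1 <= s i) (s_min : exists i, s i = 1)
  (mu0 : state n m -> R)
  (mu0_ge0 : forall a, 0 <= mu0 a) (mu0_sum : \sum_(a : state n m) mu0 a = 1)
  (x : 'I_n -> nat) (k : nat)
  (x_pos : 0 < \sum_(a : state n m | has_load x a)
                 dist e s (4 * smax s / eps) mu0 k a)
  (x_notNE : ~ is_NE e s x) :
  cond_drop e s (4 * smax s / eps) mu0 k x
    >= eps ^+ 2 / (8 * (Delta e)%:R * smax s ^+ 3).
Proof.
set al := 4 * smax s / eps.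
have [i1 hi1] := s_min.
have spos i : 0 < s i by apply: lt_le_trans (s_ge1 i); exact: ltr01.
have sle i : s i <= smax s.
  by rewrite /smax; apply: le_bigmax_seq => //; exact: mem_index_enum.
have smax1 : 1 <= smax s by rewrite -hi1 sle.
have al1 : 1 <= al by rewrite /al ler_pdivlMr // mul1r; lra.
have [[i0 j0] /andP[eij0 hc0]] : exists ij : 'I_n * 'I_n,
    e ij.1 ij.2 && ((s ij.2)^-1 < ell s x ij.1 - ell s x ij.2).
  case: (pickP (fun ij : 'I_n * 'I_n =>
     e ij.1 ij.2 && ((s ij.2)^-1 < ell s x ij.1 - ell s x ij.2))) => [ij h | h].
    by exists ij.
  exfalso; apply: x_notNE => i j eij; have := h (i, j); rewrite /= eij /= => /negbT.
  by rewrite -leNgt.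
set B := eps ^+ 2 / (8 * (Delta e)%:R * smax s ^+ 3).
have B0 : 0 <= B.
  rewrite /B divr_ge0 ?sqr_ge0 // !mulr_ge0 ?ler0n ?exprn_ge0 //; lra.
set c := fun i j => (x i)%:R * move_prob e s al x i j *
        ((2*(x i)%:R+1)/s i - (2*(x j)%:R+1)/s j - (s i)^-1 - (s j)^-1)
     - ((x i)%:R * move_prob e s al x i j) ^+ 2 * ((deg e i)%:R / s i + (deg e j)%:R / s j).
have cpos i j : e i j -> (s j)^-1 < ell s x i - ell s x j -> B <= c i j.
  move=> eij h.
  have [ki [ki0 hki]] := s_mult i; have [kj [kj0 hkj]] := s_mult j.
  have hd : eps * (s i)^-1 * (s j)^-1 <= ell s x i - ell s x j - (s j)^-1.
    by move: h; rewrite /ell hki hkj => h; exact: delta_bound.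
  have hp : (x i)%:R * move_prob e s al x i j *
      ((dmax e i j)%:R * (4 * smax s) * ((s i)^-1 + (s j)^-1))
      = (ell s x i - ell s x j) * eps.
    rewrite /move_prob eij h /= /al.
    have := deg_pos eij; have := dmax_pos eij; have := w_pos spos h.
    have := spos i; have := spos j.
    move=> si0 sj0 w0 dm0 d0.
    have sm0 : 0 < smax s by lra.
    field.
    by rewrite !gt_eqF ?ltr0n ?addr_gt0.
  have ai : 0 < (s i)^-1 by rewrite invr_gt0.
  have aj : 0 < (s j)^-1 by rewrite invr_gt0.
  have asi : 1 <= (s i)^-1 * smax s by rewrite mulrC ler_pdivlMr // mul1r.
  have asj : 1 <= (s j)^-1 * smax s by rewrite mulrC ler_pdivlMr // mul1r.
  have di : (deg e i)%:R <= (dmax e i j)%:R :> R by rewrite ler_nat leq_maxl.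
  have dj : (deg e j)%:R <= (dmax e i j)%:R :> R by rewrite ler_nat leq_maxr.
  have dm1 : 1 <= (dmax e i j)%:R :> R by rewrite ler1n dmax_pos.
  have dmD : (dmax e i j)%:R <= (Delta e)%:R :> R.
    by rewrite ler_nat geq_max !leq_bigmax.
  have := pair_core ai aj asi asj smax1 eps_pos eps_le1
     (ler0n _ (deg e i)) di (ler0n _ (deg e j)) dj dm1 dmD hd hp.
  move=> H; apply: le_trans H _; rewrite /c /ell le_eqVlt; apply/orP; left; apply/eqP; ring.
have cge0 i j : 0 <= c i j.
  case: (boolP (e i j && ((s j)^-1 < ell s x i - ell s x j))) => [/andP[eij h] | hn].
    exact: le_trans B0 (cpos i j eij h).
  have mp0 : move_prob e s al x i j = 0 by rewrite /move_prob (negPf hn).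
  suff -> : c i j = 0 by [].
  rewrite /c mp0; ring.
have perstate a : has_load x a -> B <= \sum_(b : state n m)
    step_prob e s al a b * (Psi1 m s (load a) - Psi1 m s (load b)).
  move=> ha.
  have la : load a = x.
    apply: functional_extensionality => i; apply/eqP; exact: (forallP ha i).
  rewrite drop_formula // la.
  apply: le_trans (_ : B <= \sum_i \sum_j c i j) _.
    rewrite (bigD1 i0) //= (bigD1 j0) //=.
    have h1 := cpos i0 j0 eij0 hc0.
    have h2 : 0 <= \sum_(j < n | j != j0) c i0 j by apply: sumr_ge0.
    have h3 : 0 <= \sum_(i < n | i != i0) \sum_j c i j.
      by apply: sumr_ge0 => i _; apply: sumr_ge0.
    lra.
  apply: (@main_ineq R n e e_sym s spos x (move_prob e s al x) _ _ _ _ (task_trans e s al x)).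
  - by move=> i j; case: (mp_bounds e spos al1 x i j).
  - by move=> i; exact: mp_ii.
  - by move=> i j; exact: mp_ne.
  - by move=> i; exact: mp_sum1.
  - by move=> j i; exact: tt_eq.
rewrite /cond_drop ler_pdivlMr // mulrC mulr_suml; apply: ler_sum => a ha.
rewrite (eq_bigr (fun b => dist e s al mu0 k a * (step_prob e s al a b *
   (Psi1 m s (load a) - Psi1 m s (load b))))); last by move=> b _; rewrite !mulrA.
rewrite -mulr_sumr; apply: ler_wpM2l; [exact: dist_ge0 | exact: perstate].
Qed.
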